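(* Let $N,d\ge1$, $\lambda,\tau>0$ with $\lambda\tau\le\frac12$, and let $\psi:[0,\infty)\to(0,\infty)$ be positive, nonincreasing, differentiable with $\psi(r)\le1$ for all $r\ge0$. Let $(x_i,v_i)_{i=1}^N$ solve $$\dot x_i(t)=v_i(t),\qquad \dot v_i(t)=\frac{\lambda}{N}\sum_{j=1}^N\psi(|x_i(t-\tau)-x_j(t-\tau)|)\,(v_j(t-\tau)-v_i(t-\tau)),\qquad t>0,$$ with initial data $(x_i,v_i)=(x_i^0,v_i^0)$ on $[-\tau,0]$, $(x_i^0,v_i^0)\in C([-\tau,0];\mathbb{R}^{2d})\cap C^1((-\tau,0);\mathbb{R}^{2d})$. Define for $t\ge\tau$ $$\mathcal L(t):=V(t)+4\tau\lambda^3\int_{t-\tau}^t\int_\theta^t\widetilde D(s)\,ds\,d\theta.$$ Then $\mathcal L(t)\le\mathcal L(\tau)$ for all $t\ge\tau$.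
   Context: $V(t):=\frac12\sum_{i,j=1}^N|v_i(t)-v_j(t)|^2$, $D(t):=\frac12\sum_{i,j=1}^N\psi(|x_i(t)-x_j(t)|)\,|v_j(t)-v_i(t)|^2$, and $\widetilde D(t):=D(t-\tau)$. *)

(* Defs.v *)
From Stdlib Require Import Reals List.
From Coquelicot Require Import Coquelicot.
Open Scope R_scope.

Definition sumN (n : nat) (f : nat -> R) : R :=
  fold_right Rplus 0 (map f (seq 0 n)).

(* a configuration: particle index i < N, coordinate k < d, time t *)
Definition traj := nat -> nat -> R -> R.

Definition dist2 (d : nat) (y : traj) (i j : nat) (t : R) : R :=
  sumN d (fun k => (y i k t - y j k t) ^ 2).

Definition edist (d : nat) (y : traj) (i j : nat) (t : R) : R :=
  sqrt (dist2 d y i j t).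

Definition Vfun (N d : nat) (v : traj) (t : R) : R :=
  / 2 * sumN N (fun i => sumN N (fun j => dist2 d v i j t)).

Definition Dfun (N d : nat) (psi : R -> R) (x v : traj) (t : R) : R :=
  / 2 * sumN N (fun i => sumN N (fun j =>
          psi (edist d x i j t) * dist2 d v j i t)).

Definition Lfun (N d : nat) (lam tau : R) (psi : R -> R) (x v : traj) (t : R) : R :=
  Vfun N d v t + 4 * tau * lam ^ 3 *
    RInt (fun theta => RInt (fun s => Dfun N d psi x v (s - tau)) theta t) (t - tau) t.

(* f : R -> R is differentiable on [0, +oo): two-sided derivative at r > 0,
   right derivative at r = 0 *)
Definition differentiable_on_nonneg (f : R -> R) : Prop :=
  forall r, 0 <= r -> exists l : R,
    filterlim (fun h => (f (r + h) - f r) / h)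
      (within (fun h => h <> 0 /\ 0 <= r + h) (locally 0)) (locally l).

Definition continuous_on_from (a : R) (f : R -> R) : Prop :=
  forall t, a <= t -> filterlim f (within (fun s => a <= s) (locally t)) (locally (f t)).

Definition continuous_on_cc (a b : R) (f : R -> R) : Prop :=
  forall t, a <= t <= b ->
    filterlim f (within (fun s => a <= s <= b) (locally t)) (locally (f t)).

Definition C1_on_oo (a b : R) (f : R -> R) : Prop :=
  (forall t, a < t < b -> ex_derive f t) /\
  (forall t, a < t < b -> continuous (Derive f) t).

(* Main.v *)
Require Import Defs.
From Stdlib Require Import Reals List Lra Lia.
From Coquelicot Require Import Coquelicot.
Open Scope R_scope.

Lemma fold_plus_shift (l : list R) (a : R) :
  fold_right Rplus a l = a + fold_right Rplus 0 l.
Proof. induction l; simpl; [ring| rewrite IHl; ring]. Qed.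

Lemma sumN_0 f : sumN 0 f = 0.
Proof. reflexivity. Qed.

Lemma sumN_S n f : sumN (S n) f = sumN n f + f n.
Proof.
  unfold sumN. rewrite seq_S, map_app, fold_right_app. simpl.
  rewrite fold_plus_shift. ring.
Qed.

Lemma sumN_ext n f g : (forall i, (i < n)%nat -> f i = g i) -> sumN n f = sumN n g.
Proof.
  induction n; intros H; [reflexivity|]. rewrite !sumN_S, IHn, H; auto; lia.
Qed.

Lemma sumN_le n f g : (forall i, (i < n)%nat -> f i <= g i) -> sumN n f <= sumN n g.
Proof.
  induction n; intros H; [rewrite !sumN_0; lra|]. rewrite !sumN_S.
  assert (sumN n f <= sumN n g) by (apply IHn; intros; apply H; lia).
  assert (f n <= g n) by (apply H; lia). lra.
Qed.

Lemma sumN_plus n f g : sumN n (fun i => f i + g i) = sumN n f + sumN n g.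
Proof. induction n; [rewrite !sumN_0; ring|]. rewrite !sumN_S, IHn. ring. Qed.

Lemma sumN_minus n f g : sumN n (fun i => f i - g i) = sumN n f - sumN n g.
Proof. induction n; [rewrite !sumN_0; ring|]. rewrite !sumN_S, IHn. ring. Qed.

Lemma sumN_scal n c f : sumN n (fun i => c * f i) = c * sumN n f.
Proof. induction n; [rewrite !sumN_0; ring|]. rewrite !sumN_S, IHn. ring. Qed.

Lemma sumN_const n c : sumN n (fun _ => c) = INR n * c.
Proof. induction n; [rewrite sumN_0; simpl; ring|]. rewrite !sumN_S, IHn, S_INR. ring. Qed.

Lemma sumN_swap n m (f : nat -> nat -> R) :
  sumN n (fun i => sumN m (fun j => f i j)) = sumN m (fun j => sumN n (fun i => f i j)).
Proof.
  induction n; simpl.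
  - rewrite sumN_0. symmetry. rewrite (sumN_ext m _ (fun _ => 0)) by reflexivity.
    rewrite sumN_const. ring.
  - rewrite sumN_S, IHn, <- sumN_plus. apply sumN_ext. intros. rewrite sumN_S. ring.
Qed.

Lemma sumN_nonneg n f : (forall i, (i < n)%nat -> 0 <= f i) -> 0 <= sumN n f.
Proof.
  intros H. replace 0 with (INR n * 0) at 1 by ring. rewrite <- sumN_const.
  apply sumN_le; intros; auto.
Qed.

Lemma sum_sq_diff n (a : nat -> R) :
  sumN n (fun i => sumN n (fun j => (a i - a j)^2)) =
  2 * INR n * sumN n (fun i => a i ^ 2) - 2 * (sumN n a)^2.
Proof.
  transitivity (sumN n (fun i => sumN n (fun j => a i ^ 2 + a j ^ 2 - 2 * (a i * a j)))).
  { apply sumN_ext; intros; apply sumN_ext; intros; ring. }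
  transitivity (sumN n (fun i => INR n * a i ^ 2 + sumN n (fun j => a j ^2) - 2 * (a i * sumN n a))).
  { apply sumN_ext; intros. rewrite sumN_minus, sumN_plus, sumN_const, sumN_scal, sumN_scal. ring. }
  rewrite sumN_minus, sumN_plus, sumN_const, sumN_scal, sumN_scal.
  rewrite (sumN_ext n (fun i => a i * sumN n a) (fun i => sumN n a * a i)) by (intros; ring).
  rewrite sumN_scal. ring.
Qed.

Lemma sum_sq_diff_le n (a : nat -> R) :
  sumN n (fun i => sumN n (fun j => (a i - a j)^2)) <= 2 * INR n * sumN n (fun i => a i ^ 2).
Proof. rewrite sum_sq_diff. assert (0 <= (sumN n a)^2) by (apply pow2_ge_0). lra. Qed.

Lemma cauchy_schwarz n (a : nat -> R) : (sumN n a)^2 <= INR n * sumN n (fun i => a i ^ 2).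
Proof.
  pose proof (sum_sq_diff n a).
  assert (0 <= sumN n (fun i => sumN n (fun j => (a i - a j)^2))).
  { apply sumN_nonneg; intros; apply sumN_nonneg; intros; apply pow2_ge_0. }
  lra.
Qed.

Lemma sumN_antisym n (g : nat -> nat -> R) :
  (forall i j, (i < n)%nat -> (j < n)%nat -> g j i = - g i j) ->
  sumN n (fun i => sumN n (fun j => g i j)) = 0.
Proof.
  intros H. 
  assert (E1 : sumN n (fun j => sumN n (fun i => g i j)) = sumN n (fun j => -1 * sumN n (fun i => g j i))).
  { apply sumN_ext; intros j Hj. rewrite <- sumN_scal. apply sumN_ext; intros i Hi.
    rewrite H by auto. ring. }
  rewrite sumN_scal in E1. rewrite <- sumN_swap in E1. lra.
Qed.

Lemma sum_prod_diff n (u f : nat -> R) :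
  sumN n (fun i => sumN n (fun j => (u i - u j) * (f i - f j))) =
  2 * INR n * sumN n (fun i => u i * f i) - 2 * (sumN n u * sumN n f).
Proof.
  transitivity (sumN n (fun i => sumN n (fun j => (u i * f i + u j * f j) - (u i * f j + f i * u j)))).
  { apply sumN_ext; intros; apply sumN_ext; intros; ring. }
  transitivity (sumN n (fun i => (INR n * (u i * f i) + sumN n (fun j => u j * f j)) - (u i * sumN n f + f i * sumN n u))).
  { apply sumN_ext; intros. rewrite sumN_minus, !sumN_plus, sumN_const, !sumN_scal. ring. }
  rewrite sumN_minus, !sumN_plus, sumN_const, !sumN_scal.
  rewrite (sumN_ext n (fun i => u i * sumN n f) (fun i => sumN n f * u i)) by (intros; ring).
  rewrite (sumN_ext n (fun i => f i * sumN n u) (fun i => sumN n u * f i)) by (intros; ring).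
  rewrite !sumN_scal. ring.
Qed.

Lemma alg_A n lam (u p : nat -> R) (w : nat -> nat -> R) :
  (0 < n)%nat -> 0 <= lam ->
  (forall i j, (i < n)%nat -> (j < n)%nat -> w i j = w j i) ->
  (forall i j, (i < n)%nat -> (j < n)%nat -> 0 <= w i j <= 1) ->
  sumN n (fun i => sumN n (fun j => (u i - u j) *
     (lam / INR n * sumN n (fun m => w i m * (p m - p i)) -
      lam / INR n * sumN n (fun m => w j m * (p m - p j))))) <=
  lam * sumN n (fun i => sumN n (fun j =>
     ((u i - p i) - (u j - p j))^2 - 3/4 * (w i j * (p j - p i)^2))).
Proof.
  intros Hn Hl Hs Hw.
  set (f := fun i => lam / INR n * sumN n (fun m => w i m * (p m - p i))).
  change (sumN n (fun i => sumN n (fun j => (u i - u j) * (f i - f j))) <=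
    lam * sumN n (fun i => sumN n (fun j =>
     ((u i - p i) - (u j - p j))^2 - 3/4 * (w i j * (p j - p i)^2)))).
  rewrite sum_prod_diff.
  assert (Hf : sumN n f = 0).
  { unfold f. rewrite sumN_scal, sumN_antisym; [ring|].
    intros i j Hi Hj. rewrite Hs by auto. ring. }
  assert (Hnz : INR n <> 0) by (apply not_0_INR; lia).
  assert (Huf : sumN n (fun i => u i * f i) =
     lam / INR n * (/2 * sumN n (fun i => sumN n (fun j => w i j * ((u i - u j) * (p j - p i)))))).
  { unfold f.
    transitivity (lam / INR n * sumN n (fun i => sumN n (fun j => u i * (w i j * (p j - p i))))).
    { rewrite <- sumN_scal. apply sumN_ext; intros. rewrite <- !sumN_scal. apply sumN_ext; intros. ring. }
    f_equal.
    assert (H : sumN n (fun i => sumN n (fun j => u i * (w i j * (p j - p i)) - /2 * (w i j * ((u i - u j) * (p j - p i))))) = 0).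
    { apply sumN_antisym. intros i j Hi Hj. cbv beta. rewrite (Hs j i) by auto. lra. }
    rewrite (sumN_ext n (fun i => sumN n (fun j => _ - _))
      (fun i => sumN n (fun j => u i * (w i j * (p j - p i))) - /2 * sumN n (fun j => w i j * ((u i - u j) * (p j - p i))))) in H.
    2:{ intros. rewrite sumN_minus, (sumN_scal n (/2)). reflexivity. }
    rewrite sumN_minus, sumN_scal in H.
    lra. }
  rewrite Hf, Huf.
  replace (2 * INR n * (lam / INR n * (/ 2 * sumN n (fun i => sumN n (fun j => w i j * ((u i - u j) * (p j - p i))))))
    - 2 * (sumN n u * 0))
    with (lam * sumN n (fun i => sumN n (fun j => w i j * ((u i - u j) * (p j - p i))))) by (field; auto).
  apply Rmult_le_compat_l; auto.
  apply sumN_le; intros i Hi; apply sumN_le; intros j Hj.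
  destruct (Hw i j Hi Hj) as [W0 W1].
  set (D := (u i - p i) - (u j - p j)). set (P := p j - p i).
  replace (u i - u j) with (D - P) by (unfold D, P; ring).
  assert (0 <= w i j * (D - P/2)^2) by (apply Rmult_le_pos; auto; apply pow2_ge_0).
  assert (0 <= (1 - w i j) * D^2) by (apply Rmult_le_pos; [lra|apply pow2_ge_0]).
  nra.
Qed.

Lemma ballR x (e : R) y : ball x e y <-> Rabs (y - x) < e.
Proof. reflexivity. Qed.

Section FL.
Context {F : (R -> Prop) -> Prop} {FF : Filter F}.

Lemma fl_plus f g a b : filterlim f F (locally a) -> filterlim g F (locally b) ->
  filterlim (fun s => f s + g s) F (locally (a + b)).
Proof. intros Hf Hg. apply (filterlim_comp_2 f g Rplus Hf Hg). exact (filterlim_plus a b). Qed.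

Lemma fl_mult f g a b : filterlim f F (locally a) -> filterlim g F (locally b) ->
  filterlim (fun s => f s * g s) F (locally (a * b)).
Proof. intros Hf Hg. apply (filterlim_comp_2 f g Rmult Hf Hg). exact (filterlim_mult a b). Qed.

Lemma fl_const (c : R) : filterlim (fun _ => c) F (locally c).
Proof. apply filterlim_const. Qed.

Lemma fl_minus f g a b : filterlim f F (locally a) -> filterlim g F (locally b) ->
  filterlim (fun s => f s - g s) F (locally (a - b)).
Proof.
  intros Hf Hg. replace (a - b) with (a + (-1) * b) by ring.
  apply (filterlim_ext (fun s => f s + (-1) * g s)); [intros; ring|].
  apply fl_plus; auto. apply fl_mult; auto. apply fl_const.
Qed.

Lemma fl_sq f a : filterlim f F (locally a) -> filterlim (fun s => f s ^ 2) F (locally (a ^ 2)).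
Proof.
  intros Hf. replace (a^2) with (a * a) by ring.
  apply (filterlim_ext (fun s => f s * f s)); [intros; ring|]. apply fl_mult; auto.
Qed.

Lemma fl_sumN n (g : nat -> R -> R) (a : nat -> R) :
  (forall m, (m < n)%nat -> filterlim (g m) F (locally (a m))) ->
  filterlim (fun s => sumN n (fun m => g m s)) F (locally (sumN n a)).
Proof.
  induction n; intros H.
  - rewrite sumN_0. apply (filterlim_ext (fun _ => 0)); [intros; rewrite sumN_0; auto|]. apply fl_const.
  - rewrite sumN_S. apply (filterlim_ext (fun s => sumN n (fun m => g m s) + g n s)); [intros; rewrite sumN_S; auto|].
    apply fl_plus; [apply IHn; intros; apply H; lia| apply H; lia].
Qed.

Lemma fl_sqrt f a : filterlim f F (locally a) -> filterlim (fun s => sqrt (f s)) F (locally (sqrt a)).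
Proof. intros Hf. eapply filterlim_comp; [exact Hf| apply continuous_sqrt]. Qed.

Lemma fl_within (f : R -> R) (a : R) (P : R -> Prop) : filterlim f F (locally a) -> (forall s, P (f s)) ->
  filterlim f F (within P (locally a)).
Proof.
  intros Hf HP Q HQ. unfold within in HQ. apply Hf in HQ. unfold filtermap in *.
  eapply filter_imp; [|exact HQ]. intros s Hs. apply Hs. apply HP.
Qed.
End FL.

Lemma within_locally_fl (f : R -> R) (P : R -> Prop) (t : R) (G : (R -> Prop) -> Prop) : locally t P ->
  filterlim f (within P (locally t)) G -> filterlim f (locally t) G.
Proof.
  intros HP Hf Q HQ. apply Hf in HQ. unfold filtermap, within in *.
  generalize (filter_and _ _ HP HQ). apply filter_imp. intros s [H1 H2]. auto.
Qed.

Lemma psi_cont psi : differentiable_on_nonneg psi -> forall r, 0 <= r ->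
  filterlim psi (within (fun s => 0 <= s) (locally r)) (locally (psi r)).
Proof.
  intros Hd r Hr. destruct (Hd r Hr) as [l Hl].
  apply filterlim_locally. intros eps.
  assert (H1 := proj1 (filterlim_locally _ _) Hl (mkposreal 1 Rlt_0_1)).
  destruct H1 as [dl Hdl].
  assert (Hpos : 0 < Rmin dl (eps / (Rabs l + 1))).
  { apply Rmin_pos; [apply cond_pos|]. apply Rdiv_lt_0_compat; [apply cond_pos|].
    pose proof (Rabs_pos l); lra. }
  exists (mkposreal _ Hpos). intros s Hs Hs0. change R in s. simpl in Hs. rewrite ballR in Hs |- *.
  destruct (Req_dec s r) as [E|E].
  { subst. rewrite Rminus_diag, Rabs_R0. apply cond_pos. }
  assert (Hb : ball 0 dl (s - r)).
  { rewrite ballR, Rminus_0_r. apply Rlt_le_trans with (1 := Hs). apply Rmin_l. }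
  specialize (Hdl (s - r) Hb). simpl in Hdl.
  assert (Hc : s - r <> 0 /\ 0 <= r + (s - r)) by (split; lra).
  specialize (Hdl Hc). rewrite ballR in Hdl. replace (r + (s - r)) with s in Hdl by ring.
  set (q := (psi s - psi r) / (s - r)) in Hdl.
  assert (Eq : psi s - psi r = (s - r) * q) by (unfold q; field; lra).
  rewrite Eq, Rabs_mult.
  assert (Hq : Rabs q < Rabs l + 1).
  { pose proof (Rabs_triang_inv q l). lra. }
  assert (Hsr : Rabs (s - r) < eps / (Rabs l + 1)).
  { apply Rlt_le_trans with (1 := Hs). apply Rmin_r. }
  assert (0 < Rabs l + 1) by (pose proof (Rabs_pos l); lra).
  apply Rle_lt_trans with (Rabs (s - r) * (Rabs l + 1)).
  { apply Rmult_le_compat_l; [apply Rabs_pos| lra]. }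
  apply Rlt_le_trans with (eps / (Rabs l + 1) * (Rabs l + 1)).
  { apply Rmult_lt_compat_r; auto. }
  right. field. lra.
Qed.

Section Cont.
Variables (N d : nat) (psi : R -> R) (x v : traj).
Hypothesis Hpsi : forall r, 0 <= r -> filterlim psi (within (fun s => 0 <= s) (locally r)) (locally (psi r)).

Section F.
Context {F : (R -> Prop) -> Prop} {FF : Filter F} (u0 : R).
Hypothesis Hx : forall i k, (i < N)%nat -> (k < d)%nat -> filterlim (x i k) F (locally (x i k u0)).
Hypothesis Hv : forall i k, (i < N)%nat -> (k < d)%nat -> filterlim (v i k) F (locally (v i k u0)).

Lemma fl_dist2 (y : traj) i j : (i < N)%nat -> (j < N)%nat ->
  (forall i k, (i < N)%nat -> (k < d)%nat -> filterlim (y i k) F (locally (y i k u0))) ->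
  filterlim (dist2 d y i j) F (locally (dist2 d y i j u0)).
Proof.
  intros Hi Hj Hy. unfold dist2.
  apply (fl_sumN d (fun k s => (y i k s - y j k s)^2)). intros k Hk.
  apply fl_sq, fl_minus; auto.
Qed.

Lemma fl_w i j : (i < N)%nat -> (j < N)%nat ->
  filterlim (fun s => psi (edist d x i j s)) F (locally (psi (edist d x i j u0))).
Proof.
  intros Hi Hj. eapply filterlim_comp; [|apply Hpsi, sqrt_pos].
  apply fl_within; [|intros; apply sqrt_pos]. unfold edist.
  apply fl_sqrt, fl_dist2; auto.
Qed.

Lemma fl_D : filterlim (Dfun N d psi x v) F (locally (Dfun N d psi x v u0)).
Proof.
  unfold Dfun. apply fl_mult; [apply fl_const|].
  apply (fl_sumN N (fun i s => sumN N (fun j => psi (edist d x i j s) * dist2 d v j i s))).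
  intros i Hi.
  apply (fl_sumN N (fun j s => psi (edist d x i j s) * dist2 d v j i s)). intros j Hj.
  apply fl_mult; [apply fl_w; auto| apply fl_dist2; auto].
Qed.

Lemma fl_G i k : (i < N)%nat -> (k < d)%nat ->
  filterlim (fun s => sumN N (fun j => psi (edist d x i j s) * (v j k s - v i k s))) F
    (locally (sumN N (fun j => psi (edist d x i j u0) * (v j k u0 - v i k u0)))).
Proof.
  intros Hi Hk.
  apply (fl_sumN N (fun j s => psi (edist d x i j s) * (v j k s - v i k s))). intros j Hj.
  apply fl_mult; [apply fl_w; auto| apply fl_minus; auto].
Qed.
End F.
End Cont.

Lemma Rmax0_eq s : Rmax s 0 = (s + Rabs s) / 2.
Proof. unfold Rmax. destruct (Rle_dec s 0); [rewrite Rabs_left1 by lra|rewrite Rabs_right by lra]; field. Qed.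

Lemma cont_shift_max (s tau : R) :
  filterlim (fun u => Rmax u 0 - tau) (locally s)
     (within (fun u => - tau <= u) (locally (Rmax s 0 - tau))).
Proof.
  apply fl_within.
  - apply (filterlim_ext (fun u => (u + Rabs u) / 2 - tau)); [intros; rewrite Rmax0_eq; auto|].
    rewrite Rmax0_eq. apply fl_minus; [|apply fl_const].
    unfold Rdiv. apply fl_mult; [|apply fl_const]. apply fl_plus; [apply filterlim_id|].
    apply continuous_Rabs.
  - intros u. pose proof (Rmax_r u 0). lra.
Qed.

Lemma cont_shift (s tau : R) :
  filterlim (fun u => u - tau) (locally s) (locally (s - tau)).
Proof. apply fl_minus; [apply filterlim_id| apply fl_const]. Qed.

Lemma is_RInt_sumN n (g : nat -> R -> R) a b :
  (forall m, (m < n)%nat -> ex_RInt (g m) a b) ->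
  is_RInt (fun s => sumN n (fun m => g m s)) a b (sumN n (fun m => RInt (g m) a b)).
Proof.
  induction n; intros H.
  - rewrite sumN_0. apply (is_RInt_ext (fun _ => 0)); [intros; rewrite sumN_0; auto|].
    assert (K := is_RInt_const a b (0:R)).
    unfold scal in K; simpl in K; unfold mult in K; simpl in K. rewrite Rmult_0_r in K. exact K.
  - rewrite sumN_S. apply (is_RInt_ext (fun s => plus (sumN n (fun m => g m s)) (g n s))).
    { intros; rewrite sumN_S; auto. }
    apply (is_RInt_plus (fun s => sumN n (fun m => g m s)) (g n)).
    + apply IHn; intros; apply H; lia.
    + apply (RInt_correct (V := R_CompleteNormedModule)), H; lia.
Qed.

Lemma RInt_sq_le (g : R -> R) a b : a < b -> (forall z, a <= z <= b -> continuous g z) ->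
  (RInt g a b)^2 <= (b - a) * RInt (fun s => g s ^ 2) a b.
Proof.
  intros Hab Hc.
  assert (Hc' : forall z, Rmin a b <= z <= Rmax a b -> continuous g z).
  { intros z Hz. rewrite Rmin_left, Rmax_right in Hz by lra. auto. }
  assert (Eg : ex_RInt g a b) by (apply (ex_RInt_continuous (V := R_CompleteNormedModule)); auto).
  assert (Eg2 : ex_RInt (fun s => g s ^ 2) a b).
  { apply (ex_RInt_continuous (V := R_CompleteNormedModule)). intros z Hz. apply fl_sq. apply Hc'; auto. }
  set (I := RInt g a b). set (J := RInt (fun s => g s ^ 2) a b).
  set (c := I / (b - a)).
  assert (H : is_RInt (fun s => (g s - c)^2) a b (plus (plus J (scal (-2 * c) I)) (scal (b - a) (c^2)))).
  { apply (is_RInt_ext (fun s => plus (plus (g s ^ 2) (scal (-2 * c) (g s))) (c^2))).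
    { intros. unfold plus, scal; simpl. unfold mult; simpl. ring. }
    apply (is_RInt_plus (V := R_NormedModule)); [apply (is_RInt_plus (V := R_NormedModule))|apply (is_RInt_const (V := R_NormedModule))].
    - apply (RInt_correct (V := R_CompleteNormedModule)); auto.
    - apply (is_RInt_scal (V := R_NormedModule)), (RInt_correct (V := R_CompleteNormedModule)); auto. }
  assert (H0 : 0 <= RInt (fun s => (g s - c)^2) a b).
  { apply RInt_ge_0; [lra| eexists; exact H| intros; apply pow2_ge_0]. }
  rewrite (is_RInt_unique _ _ _ _ H) in H0.
  unfold plus, scal in H0; simpl in H0; unfold mult in H0; simpl in H0.
  unfold c in H0.
  assert (Hba : 0 < b - a) by lra.
  assert (E : J + -2 * (I / (b - a)) * I + (b - a) * (I / (b - a) * (I / (b - a) * 1)) = (J * (b - a) - I^2) * / (b - a)) by (field; lra).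
  rewrite E in H0.
  assert (0 <= J * (b - a) - I^2).
  { apply Rmult_le_reg_r with (/ (b - a)); [apply Rinv_0_lt_compat; lra|]. rewrite Rmult_0_l. exact H0. }
  fold I J. lra.
Qed.

Lemma isd_val (f : R -> R) x l l' : l = l' -> is_derive f x l -> is_derive f x l'.
Proof. intros ->; auto. Qed.

Lemma isd_plus (f g : R -> R) x a b : is_derive f x a -> is_derive g x b ->
  is_derive (fun s => f s + g s) x (a + b).
Proof. intros. apply (is_derive_plus f g x a b); auto. Qed.

Lemma isd_minus (f g : R -> R) x a b : is_derive f x a -> is_derive g x b ->
  is_derive (fun s => f s - g s) x (a - b).
Proof. intros. apply (is_derive_minus f g x a b); auto. Qed.

Lemma isd_const (c x : R) : is_derive (fun _ => c) x 0.
Proof. apply (is_derive_const c x). Qed.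

Lemma isd_sq (f : R -> R) x a : is_derive f x a -> is_derive (fun s => f s ^ 2) x (2 * f x * a).
Proof. intros H. eapply isd_val; [|apply is_derive_pow, H]. simpl. ring. Qed.

Lemma isd_sumN n (g : nat -> R -> R) (g' : nat -> R) x :
  (forall m, (m < n)%nat -> is_derive (g m) x (g' m)) ->
  is_derive (fun s => sumN n (fun m => g m s)) x (sumN n g').
Proof.
  induction n; intros H.
  - rewrite sumN_0. apply (is_derive_ext (fun _ => 0)); [intros; rewrite sumN_0; auto|apply isd_const].
  - rewrite sumN_S. apply (is_derive_ext (fun s => sumN n (fun m => g m s) + g n s)).
    { intros; rewrite sumN_S; auto. }
    apply isd_plus; [apply IHn; intros; apply H; lia| apply H; lia].
Qed.

Lemma sumN_swap3 n m p (h : nat -> nat -> nat -> R) :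
  sumN p (fun k => sumN n (fun i => sumN m (fun j => h i j k))) =
  sumN n (fun i => sumN m (fun j => sumN p (fun k => h i j k))).
Proof.
  rewrite sumN_swap. apply sumN_ext; intros. apply sumN_swap.
Qed.

Lemma loc_ge a u0 : a < u0 -> locally u0 (fun s => a <= s).
Proof.
  intros H. assert (Hp : 0 < u0 - a) by lra. exists (mkposreal _ Hp).
  intros s Hs. simpl in Hs. change R in s. rewrite ballR in Hs.
  apply Rabs_lt_between in Hs. lra.
Qed.


Lemma sumN3_lin p n c e (f g : nat -> nat -> nat -> R) :
  sumN p (fun k => c * sumN n (fun i => sumN n (fun j => f k i j - e * g k i j))) =
  c * sumN p (fun k => sumN n (fun i => sumN n (fun j => f k i j)))
  - c * e * sumN p (fun k => sumN n (fun i => sumN n (fun j => g k i j))).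
Proof.
  transitivity (sumN p (fun k => c * sumN n (fun i => sumN n (fun j => f k i j))
     - c * e * sumN n (fun i => sumN n (fun j => g k i j)))).
  { apply sumN_ext; intros k Hk.
    rewrite (sumN_ext n _ (fun i => sumN n (fun j => f k i j) - e * sumN n (fun j => g k i j)))
      by (intros; rewrite sumN_minus, sumN_scal; auto).
    rewrite sumN_minus, sumN_scal. ring. }
  rewrite sumN_minus, !sumN_scal. ring.
Qed.

Lemma term_bound n lam (W b : nat -> R) : (0 < n)%nat ->
  (forall j, (j < n)%nat -> 0 <= W j <= 1) ->
  (lam / INR n * sumN n (fun j => W j * b j))^2 <= lam^2 / INR n * sumN n (fun j => W j * b j ^ 2).
Proof.
  intros Hn HW. assert (HNr : 0 < INR n) by (apply lt_0_INR; lia).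
  pose proof (cauchy_schwarz n (fun j => W j * b j)) as CS.
  assert (H2 : sumN n (fun j => (W j * b j)^2) <= sumN n (fun j => W j * b j ^ 2)).
  { apply sumN_le; intros j Hj. destruct (HW j Hj).
    assert (0 <= (W j - W j * W j) * b j ^ 2) by (apply Rmult_le_pos; [nra|apply pow2_ge_0]).
    nra. }
  replace ((lam / INR n * sumN n (fun j => W j * b j))^2)
    with (lam^2 / (INR n * INR n) * (sumN n (fun j => W j * b j))^2) by (field; lra).
  apply Rle_trans with (lam^2 / (INR n * INR n) * (INR n * sumN n (fun j => W j * b j ^ 2))).
  { apply Rmult_le_compat_l. { apply Rmult_le_pos; [apply pow2_ge_0|].
      left; apply Rinv_0_lt_compat; nra. }
    apply Rle_trans with (1 := CS). apply Rmult_le_compat_l; lra. }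
  right. field. lra.
Qed.

Section Main.
Variables (N d : nat) (lam tau : R) (psi : R -> R) (x v : traj).
Hypothesis HN : (1 <= N)%nat.
Hypothesis Hlam : 0 < lam.
Hypothesis Htau : 0 < tau.
Hypothesis Hlt : lam * tau <= / 2.
Hypothesis Hpos : forall r, 0 <= r -> 0 < psi r.
Hypothesis Hle1 : forall r, 0 <= r -> psi r <= 1.
Hypothesis Hpsi : forall r, 0 <= r -> filterlim psi (within (fun s => 0 <= s) (locally r)) (locally (psi r)).
Hypothesis Hcont : forall i k, (i < N)%nat -> (k < d)%nat ->
     continuous_on_from (- tau) (x i k) /\ continuous_on_from (- tau) (v i k).
Hypothesis Hode : forall i k t, (i < N)%nat -> (k < d)%nat -> 0 < t ->
     is_derive (x i k) t (v i k t) /\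
     is_derive (v i k) t
       (lam / INR N * sumN N (fun j =>
          psi (edist d x i j (t - tau)) * (v j k (t - tau) - v i k (t - tau)))).

Definition fd i k s := lam / INR N * sumN N (fun j =>
          psi (edist d x i j (s - tau)) * (v j k (s - tau) - v i k (s - tau))).
Definition E (s : R) : R := Dfun N d psi x v (Rmax s 0 - tau).
Definition P (u : R) : R := RInt E 0 u.
Definition Q (u : R) : R := RInt P 0 u.
Definition Fn s := Vfun N d v s + 4 * tau * lam ^ 3 * (tau * P s - (Q s - Q (s - tau))).
Definition dV s := sumN N (fun i => sumN N (fun j => sumN d (fun k =>
   (v i k s - v j k s) * (fd i k s - fd j k s)))).
Definition dF s := dV s + 4 * tau * lam ^ 3 * (tau * E s - (P s - P (s - tau))).

Lemma edist_sym i j s : edist d x i j s = edist d x j i s.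
Proof. unfold edist, dist2. f_equal. apply sumN_ext; intros; ring. Qed.

Lemma w_bounds i j s : 0 <= psi (edist d x i j s) <= 1.
Proof. split; [left; apply Hpos, sqrt_pos| apply Hle1, sqrt_pos]. Qed.

Lemma Dfun_nonneg u : 0 <= Dfun N d psi x v u.
Proof.
  unfold Dfun. apply Rmult_le_pos; [lra|]. apply sumN_nonneg; intros i Hi.
  apply sumN_nonneg; intros j Hj. apply Rmult_le_pos; [apply w_bounds|].
  unfold dist2. apply sumN_nonneg; intros; apply pow2_ge_0.
Qed.

Lemma E_nonneg s : 0 <= E s.
Proof. apply Dfun_nonneg. Qed.

Lemma E_cont s : continuous E s.
Proof.
  unfold E. eapply filterlim_comp; [apply cont_shift_max|].
  apply (fl_D N d psi x v Hpsi (Rmax s 0 - tau)); intros i k Hi Hk; apply Hcont; auto;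
   pose proof (Rmax_r s 0); lra.
Qed.

Lemma ex_E a b : ex_RInt E a b.
Proof. apply (ex_RInt_continuous (V := R_CompleteNormedModule)). intros; apply E_cont. Qed.

Lemma P_der s : is_derive P s (E s).
Proof.
  apply (is_derive_RInt E P 0 s); [|apply E_cont].
  apply filter_forall. intros b. apply (RInt_correct (V := R_CompleteNormedModule)), ex_E.
Qed.

Lemma P_cont s : continuous P s.
Proof. apply (ex_derive_continuous (K := R_AbsRing) (V := R_NormedModule) P s). exists (E s). apply P_der. Qed.

Lemma ex_P a b : ex_RInt P a b.
Proof. apply (ex_RInt_continuous (V := R_CompleteNormedModule)). intros; apply P_cont. Qed.

Lemma Q_der s : is_derive Q s (P s).
Proof.
  apply (is_derive_RInt P Q 0 s); [|apply P_cont].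
  apply filter_forall. intros b. apply (RInt_correct (V := R_CompleteNormedModule)), ex_P.
Qed.

Lemma fd_cont i k s : (i < N)%nat -> (k < d)%nat -> 0 < s -> continuous (fd i k) s.
Proof.
  intros Hi Hk Hs. unfold fd. apply fl_mult; [apply fl_const|].
  apply (filterlim_comp R R R (fun u => u - tau) (fun u => sumN N (fun j => psi (edist d x i j u) * (v j k u - v i k u))) (locally s) (locally (s - tau))); [apply cont_shift|].
  apply (within_locally_fl _ (fun u => - tau <= u)); [apply loc_ge; lra|].
  apply (fl_G N d psi x v Hpsi (s - tau)); auto; intros i' k' Hi' Hk'; apply Hcont; auto; lra.
Qed.

Lemma V_der s : 0 < s -> is_derive (Vfun N d v) s (dV s).
Proof.
  intros Hs.
  apply (isd_val _ _ (/2 * sumN N (fun i => sumN N (fun j => sumN d (fun k =>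
     2 * (v i k s - v j k s) * (fd i k s - fd j k s)))))).
  { unfold dV. rewrite <- sumN_scal; apply sumN_ext; intros; rewrite <- sumN_scal; apply sumN_ext; intros;
    rewrite <- sumN_scal; apply sumN_ext; intros; field. }
  unfold Vfun, dist2. apply is_derive_scal.
  apply (isd_sumN N (fun i s => sumN N (fun j => sumN d (fun k => (v i k s - v j k s)^2)))).
  intros i Hi.
  apply (isd_sumN N (fun j s => sumN d (fun k => (v i k s - v j k s)^2))). intros j Hj.
  apply (isd_sumN d (fun k s => (v i k s - v j k s)^2)). intros k Hk.
  apply (isd_sq (fun s => v i k s - v j k s)), isd_minus; unfold fd; apply Hode; auto.
Qed.

Lemma F_der s : 0 < s -> is_derive Fn s (dF s).
Proof.
  intros Hs. unfold Fn, dF.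
  apply isd_plus; [apply V_der; auto|].
  apply is_derive_scal. apply isd_minus.
  - apply is_derive_scal, P_der.
  - apply isd_minus; [apply Q_der|].
    apply (isd_val _ _ (scal (1 - 0) (P (s - tau)))).
    { unfold scal; simpl; unfold mult; simpl; ring. }
    apply (is_derive_comp Q (fun u => u - tau)); [apply Q_der|].
    apply isd_minus; [apply (is_derive_id (K := R_AbsRing))|apply isd_const].
Qed.

Lemma delta_int i k t : (i < N)%nat -> (k < d)%nat -> tau < t ->
  v i k t - v i k (t - tau) = RInt (fd i k) (t - tau) t.
Proof.
  intros Hi Hk Ht. symmetry. apply is_RInt_unique.
  apply (is_RInt_derive (V := R_CompleteNormedModule) (v i k) (fd i k) (t - tau) t);
   intros z Hz; rewrite Rmin_left, Rmax_right in Hz by lra.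
  - unfold fd. apply Hode; auto; lra.
  - apply fd_cont; auto; lra.
Qed.

Lemma fd_sq_bound s : 0 < s ->
  sumN d (fun k => sumN N (fun i => fd i k s ^ 2)) <= 2 * lam ^ 2 / INR N * E s.
Proof.
  intros Hs. assert (HNr : 0 < INR N) by (apply lt_0_INR; lia).
  apply Rle_trans with (sumN d (fun k => sumN N (fun i => lam^2 / INR N *
     sumN N (fun j => psi (edist d x i j (s - tau)) * (v j k (s - tau) - v i k (s - tau)) ^ 2)))).
  { apply sumN_le; intros k Hk; apply sumN_le; intros i Hi. unfold fd.
    apply (term_bound N lam (fun j => psi (edist d x i j (s - tau))) (fun j => v j k (s - tau) - v i k (s - tau))); [lia|].
    intros; apply w_bounds. }
  right. unfold E. rewrite Rmax_left by lra. unfold Dfun.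
  transitivity (lam^2 / INR N * sumN d (fun k => sumN N (fun i => sumN N (fun j =>
     psi (edist d x i j (s - tau)) * (v j k (s - tau) - v i k (s - tau)) ^ 2)))).
  { rewrite <- sumN_scal. apply sumN_ext; intros. rewrite <- sumN_scal. apply sumN_ext; intros. reflexivity. }
  rewrite (sumN_swap3 N N d (fun i j k => psi (edist d x i j (s - tau)) * (v j k (s - tau) - v i k (s - tau)) ^ 2)).
  rewrite (sumN_ext N (fun i => sumN N (fun j => sumN d (fun k => _)))
     (fun i => sumN N (fun j => psi (edist d x i j (s - tau)) * dist2 d v j i (s - tau)))).
  2:{ intros. apply sumN_ext; intros. unfold dist2. rewrite sumN_scal. reflexivity. }
  field. lra.
Qed.

Lemma dF_le t : tau < t -> dF t <= 0.
Proof.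
  intros Ht.
  assert (HNr : 0 < INR N) by (apply lt_0_INR; lia).
  set (Sd := sumN d (fun k => sumN N (fun i => sumN N (fun j =>
     ((v i k t - v i k (t - tau)) - (v j k t - v j k (t - tau)))^2)))).
  set (SW := sumN d (fun k => sumN N (fun i => sumN N (fun j =>
     psi (edist d x i j (t - tau)) * (v j k (t - tau) - v i k (t - tau))^2)))).
  set (DP := P t - P (t - tau)).
  assert (H1 : dV t <= lam * Sd - lam * (3/4) * SW).
  { unfold dV. rewrite <- (sumN_swap3 N N d (fun i j k => (v i k t - v j k t) * (fd i k t - fd j k t))).
    apply Rle_trans with (sumN d (fun k => lam * sumN N (fun i => sumN N (fun j =>
       ((v i k t - v i k (t - tau)) - (v j k t - v j k (t - tau)))^2 -
        3/4 * (psi (edist d x i j (t - tau)) * (v j k (t - tau) - v i k (t - tau))^2))))).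
    { apply sumN_le; intros k Hk. unfold fd.
      apply (alg_A N lam (fun i => v i k t) (fun j => v j k (t - tau))
               (fun i j => psi (edist d x i j (t - tau)))); [lia|lra| |].
      - intros; rewrite edist_sym; auto.
      - intros; apply w_bounds. }
    right. unfold Sd, SW.
    apply (sumN3_lin d N lam (3/4)
      (fun k i j => ((v i k t - v i k (t - tau)) - (v j k t - v j k (t - tau)))^2)
      (fun k i j => psi (edist d x i j (t - tau)) * (v j k (t - tau) - v i k (t - tau))^2)). }
  assert (H2 : SW = 2 * E t).
  { unfold E. rewrite Rmax_left by lra. unfold Dfun, SW.
    rewrite (sumN_swap3 N N d (fun i j k => psi (edist d x i j (t - tau)) * (v j k (t - tau) - v i k (t - tau)) ^ 2)).
    rewrite (sumN_ext N (fun i => sumN N (fun j => sumN d (fun k => _)))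
     (fun i => sumN N (fun j => psi (edist d x i j (t - tau)) * dist2 d v j i (t - tau)))).
    2:{ intros. apply sumN_ext; intros. unfold dist2. rewrite sumN_scal. reflexivity. }
    field. }
  set (Y := sumN d (fun k => sumN N (fun i => (v i k t - v i k (t - tau))^2))).
  assert (H3 : Sd <= 2 * INR N * Y).
  { unfold Sd, Y. rewrite <- sumN_scal. apply sumN_le; intros k Hk.
    apply (sum_sq_diff_le N (fun i => v i k t - v i k (t - tau))). }
  set (Z := sumN d (fun k => sumN N (fun i => RInt (fun s => fd i k s ^ 2) (t - tau) t))).
  assert (H5 : Y <= tau * Z).
  { unfold Y, Z. rewrite <- sumN_scal. apply sumN_le; intros k Hk.
    rewrite <- sumN_scal. apply sumN_le; intros i Hi.
    rewrite delta_int by auto.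
    apply Rle_trans with ((t - (t - tau)) * RInt (fun s => fd i k s ^ 2) (t - tau) t).
    - apply RInt_sq_le; [lra|]. intros; apply fd_cont; auto; lra.
    - right. f_equal. ring. }
  assert (exF : forall i k, (i < N)%nat -> (k < d)%nat -> ex_RInt (fun s => fd i k s ^ 2) (t - tau) t).
  { intros i k Hi Hk. apply (ex_RInt_continuous (V := R_CompleteNormedModule)).
    intros z Hz. rewrite Rmin_left, Rmax_right in Hz by lra. apply fl_sq, fd_cont; auto; lra. }
  assert (Hin : forall k, (k < d)%nat -> is_RInt (fun s => sumN N (fun i => fd i k s ^ 2)) (t - tau) t
            (sumN N (fun i => RInt (fun s => fd i k s ^ 2) (t - tau) t))).
  { intros k Hk. apply (is_RInt_sumN N (fun i s => fd i k s ^ 2)). intros; apply exF; auto. }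
  assert (Hsum : is_RInt (fun s => sumN d (fun k => sumN N (fun i => fd i k s ^ 2))) (t - tau) t Z).
  { unfold Z.
    rewrite (sumN_ext d (fun k => sumN N (fun i => RInt (fun s => fd i k s ^ 2) (t - tau) t))
               (fun k => RInt (fun s => sumN N (fun i => fd i k s ^ 2)) (t - tau) t)).
    2:{ intros k Hk. symmetry. apply is_RInt_unique. apply Hin; auto. }
    apply (is_RInt_sumN d (fun k s => sumN N (fun i => fd i k s ^ 2))).
    intros k Hk. eexists. apply Hin; auto. }
  assert (HDP : RInt E (t - tau) t = DP).
  { pose proof (RInt_Chasles (V := R_CompleteNormedModule) E 0 (t - tau) t (ex_E _ _) (ex_E _ _)) as C.
    unfold DP, P. unfold plus in C; simpl in C. lra. }
  assert (HRs : RInt (fun s => 2 * lam ^ 2 / INR N * E s) (t - tau) t = 2 * lam ^ 2 / INR N * DP).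
  { pose proof (RInt_scal (V := R_CompleteNormedModule) E (t - tau) t (2 * lam ^ 2 / INR N) (ex_E _ _)) as HR.
    transitivity (scal (2 * lam ^ 2 / INR N) (RInt E (t - tau) t)); [exact HR|].
    rewrite HDP. reflexivity. }
  assert (H7 : Z <= 2 * lam ^ 2 / INR N * DP).
  { rewrite <- HRs. rewrite <- (is_RInt_unique _ _ _ _ Hsum).
    apply RInt_le; [lra| eexists; exact Hsum| |].
    - apply (ex_RInt_continuous (V := R_CompleteNormedModule)). intros z Hz.
      apply fl_mult; [apply fl_const| apply E_cont].
    - intros s Hs. apply fd_sq_bound. lra. }
  assert (HSd : Sd <= 4 * tau * lam ^ 2 * DP).
  { apply Rle_trans with (2 * INR N * Y); auto.
    apply Rle_trans with (2 * INR N * (tau * Z)); [apply Rmult_le_compat_l; lra|].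
    apply Rle_trans with (2 * INR N * (tau * (2 * lam ^ 2 / INR N * DP))).
    { apply Rmult_le_compat_l; [lra|]. apply Rmult_le_compat_l; lra. }
    right. field. lra. }
  assert (HE := E_nonneg t).
  assert (K1 : lam * Sd <= lam * (4 * tau * lam ^ 2 * DP)) by (apply Rmult_le_compat_l; lra).
  assert (Hq : (lam * tau) ^ 2 <= / 4).
  { assert (0 < lam * tau) by (apply Rmult_lt_0_compat; auto). nra. }
  assert (K2 : (lam * tau) ^ 2 * (lam * E t) <= / 4 * (lam * E t)).
  { apply Rmult_le_compat_r; auto. apply Rmult_le_pos; lra. }
  assert (K3 : 0 <= lam * E t) by (apply Rmult_le_pos; lra).
  unfold dF. fold DP.
  assert (EQ1 : lam * (4 * tau * lam ^ 2 * DP) = 4 * tau * lam ^ 3 * DP) by ring.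
  assert (EQ2 : 4 * tau * lam ^ 3 * (tau * E t - DP) = 4 * ((lam * tau) ^ 2 * (lam * E t)) - 4 * tau * lam ^ 3 * DP) by ring.
  assert (EQ3 : lam * (3/4) * SW = 3/2 * (lam * E t)) by (rewrite H2; field).
  rewrite EQ2. lra.
Qed.

Lemma L_eq t : tau <= t -> Lfun N d lam tau psi x v t = Fn t.
Proof.
  intros Ht. unfold Lfun, Fn. f_equal. f_equal.
  rewrite (RInt_ext (V := R_CompleteNormedModule) _ (fun th => P t - P th)).
  2:{ intros th Hth. rewrite Rmin_left, Rmax_right in Hth by lra.
      transitivity (RInt E th t).
      - apply (RInt_ext (V := R_CompleteNormedModule)). intros s Hs.
        rewrite Rmin_left, Rmax_right in Hs by lra. unfold E. rewrite Rmax_left by lra. reflexivity.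
      - pose proof (RInt_Chasles (V := R_CompleteNormedModule) E 0 th t (ex_E _ _) (ex_E _ _)) as C.
        unfold P. unfold plus in C; simpl in C. lra. }
  pose proof (RInt_Chasles (V := R_CompleteNormedModule) P 0 (t - tau) t (ex_P _ _) (ex_P _ _)) as C2.
  unfold plus in C2; simpl in C2.
  assert (HI : is_RInt (fun th => P t - P th) (t - tau) t (tau * P t - RInt P (t - tau) t)).
  { apply (is_RInt_ext (fun th => minus (P t) (P th))); [intros; reflexivity|].
    assert (E1 : tau * P t - RInt P (t - tau) t = minus (scal (t - (t - tau)) (P t)) (RInt P (t - tau) t)).
    { unfold minus, plus, opp, scal; simpl; unfold mult; simpl. ring. }
    rewrite E1.
    apply (is_RInt_minus (V := R_NormedModule)).
    - apply (is_RInt_const (V := R_NormedModule)).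
    - apply (RInt_correct (V := R_CompleteNormedModule)), ex_P. }
  rewrite (is_RInt_unique _ _ _ _ HI). unfold Q. lra.
Qed.

Lemma main_sec t : tau <= t -> Lfun N d lam tau psi x v t <= Lfun N d lam tau psi x v tau.
Proof.
  intros Ht. destruct (Rle_lt_or_eq_dec tau t Ht) as [Hl|He]; [|subst; lra].
  rewrite (L_eq t Ht), (L_eq tau (Rle_refl _)).
  destruct (MVT_gen Fn tau t (fun s => if Rlt_dec tau s then dF s else 0)) as [c [Hc Eq]].
  - intros z Hz. rewrite Rmin_left, Rmax_right in Hz by lra.
    destruct (Rlt_dec tau z); [apply F_der; lra| lra].
  - intros z Hz. rewrite Rmin_left, Rmax_right in Hz by lra.
    apply continuity_pt_filterlim.
    apply (ex_derive_continuous (K := R_AbsRing) (V := R_NormedModule) Fn z).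
    exists (dF z). apply F_der. lra.
  - assert (Hd : (if Rlt_dec tau c then dF c else 0) <= 0).
    { destruct (Rlt_dec tau c); [apply dF_le; auto| lra]. }
    assert (0 <= t - tau) by lra.
    assert ((if Rlt_dec tau c then dF c else 0) * (t - tau) <= 0).
    { apply Rmult_le_0_r; auto. }
    lra.
Qed.

End Main.

Theorem lemma3p2 (N d : nat) (lam tau : R) (psi : R -> R) (x v : traj) :
  (1 <= N)%nat -> (1 <= d)%nat ->
  0 < lam -> 0 < tau -> lam * tau <= / 2 ->
  (* psi : [0,oo) -> (0,oo) positive, nonincreasing, differentiable, psi <= 1 *)
  (forall r, 0 <= r -> 0 < psi r) ->
  (forall r s, 0 <= r -> r <= s -> psi s <= psi r) ->
  differentiable_on_nonneg psi ->
  (forall r, 0 <= r -> psi r <= 1) ->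
  (* initial data on [-tau, 0] : in C([-tau,0]) and C^1((-tau,0)) *)
  (forall i k, (i < N)%nat -> (k < d)%nat ->
     continuous_on_cc (- tau) 0 (x i k) /\ continuous_on_cc (- tau) 0 (v i k) /\
     C1_on_oo (- tau) 0 (x i k) /\ C1_on_oo (- tau) 0 (v i k)) ->
  (* the solution is continuous on [-tau, oo) *)
  (forall i k, (i < N)%nat -> (k < d)%nat ->
     continuous_on_from (- tau) (x i k) /\ continuous_on_from (- tau) (v i k)) ->
  (* the delayed Cucker-Smale system for t > 0 *)
  (forall i k t, (i < N)%nat -> (k < d)%nat -> 0 < t ->
     is_derive (x i k) t (v i k t) /\
     is_derive (v i k) t
       (lam / INR N * sumN N (fun j =>
          psi (edist d x i j (t - tau)) * (v j k (t - tau) - v i k (t - tau))))) ->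
  forall t, tau <= t -> Lfun N d lam tau psi x v t <= Lfun N d lam tau psi x v tau.
Proof.
  intros HN Hd Hlam Htau Hlt Hpos Hmono Hdiff Hle1 Hinit Hcont Hode t Ht.
  pose proof (psi_cont psi Hdiff) as Hpsi.
  eapply main_sec; eauto.
Qed.
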